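(* Let $b$ be a positive integer. The Frobenius endomorphism $F_b:\mathbb Z[1/b][q]^{\mathbb N_b}\to\mathbb Z[1/b][q]^{\mathbb N_b}$, induced by $q\mapsto q^b$, is a well-defined algebra isomorphism.
   Context: $\mathbb N_b=\{n\in\mathbb N:(n,b)=1\}$. For $S\subset\mathbb N$, $\mathbb Z[1/b][q]^S=\varprojlim_{f\in\Phi^*_S}\mathbb Z[1/b][q]/(f)$, where $\Phi^*_S$ is the multiplicative set generated by the cyclotomic polynomials $\Phi_n(q)$, $n\in S$, directed by divisibility. $F_b$ is the inverse limit of the maps $\mathbb Z[1/b][q]/(\prod_i\Phi_{n_i}^{k_i})\to\mathbb Z[1/b][q]/(\prod_i\Phi_{n_i}^{k_i})$, $q\mapsto q^b$, for finitely many $n_i\in\mathbb N_b$, $k_i\in\mathbb N$. *)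

(* Defs.v *)
From HB Require Import structures.
From mathcomp Require Import all_boot all_order all_algebra all_field.
Set Implicit Arguments. Unset Strict Implicit. Unset Printing Implicit Defensive.
Import Order.TTheory GRing.Theory Num.Theory.
Local Open Scope ring_scope.

(* Z[1/b] as the subring of rat of elements m / b^k. *)
Definition inZb (b : nat) (x : rat) : Prop :=
  exists (m : int) (k : nat), x = m%:~R / (b ^ k)%N%:R.

Definition polyZb (b : nat) (p : {poly rat}) : Prop :=
  forall i : nat, inZb b p`_i.

Definition congrZb (b : nat) (f p r : {poly rat}) : Prop :=
  exists h : {poly rat}, polyZb b h /\ p - r = h * f.

Definition dvdZb (b : nat) (f g : {poly rat}) : Prop := congrZb b f g 0.

Definition PhiStar (b : nat) (f : {poly rat}) : Prop :=
  exists s : seq nat, all (fun n => (0 < n)%N && coprime n b) s /\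
    f = \prod_(n <- s) map_poly intr 'Phi_n.

(* Elements of the inverse limit Z[1/b][q]^{N_b}: compatible families
   (x_f)_f, x_f a representative in Z[1/b][q] of a class in Z[1/b][q]/(f). *)
Definition limfam (b : nat) (x : {poly rat} -> {poly rat}) : Prop :=
  (forall f, PhiStar b f -> polyZb b (x f)) /\
  (forall f g, PhiStar b f -> PhiStar b g -> dvdZb b f g ->
     congrZb b f (x g) (x f)).

Definition limeq (b : nat) (x y : {poly rat} -> {poly rat}) : Prop :=
  forall f, PhiStar b f -> congrZb b f (x f) (y f).

Definition Frob (b : nat) (x : {poly rat} -> {poly rat}) : {poly rat} -> {poly rat} :=
  fun f => x f \Po 'X^b.

(* Main.v *)
Require Import Defs.
From Stdlib Require Import Classical ClassicalEpsilon.
From HB Require Import structures.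
From mathcomp Require Import all_boot all_order all_algebra all_field.
Set Implicit Arguments. Unset Strict Implicit. Unset Printing Implicit Defensive.
Import Order.TTheory GRing.Theory Num.Theory.
Local Open Scope ring_scope.

Lemma comp_Xn_l (R : comNzRingType) (p : {poly R}) n : 'X^n \Po p = p ^+ n.
Proof. by rewrite rmorphXn /= comp_polyX. Qed.

Lemma cyc_dvd_comp (n c : nat) : (0 < n)%N -> coprime c n ->
  exists h : {poly int}, 'Phi_n \Po 'X^c = h * 'Phi_n.
Proof.
move=> n0 co.
have mon := Cyclotomic_monic n.
suff: 'Phi_n %| 'Phi_n \Po 'X^c by move/(Pdiv.IdomainMonic.dvdpP mon).
rewrite -dvdp_rat_int -(dvdp_map (@ratr algC)) -!map_poly_comp.
have defZtoC: (@ratr algC) \o intr =1 intr by move=> a; rewrite /= rmorph_int.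
rewrite !(eq_map_poly defZtoC) map_comp_poly map_polyXn.
have [z pz] := C_prim_root_exists n0.
rewrite (Cintr_Cyclotomic pz).
pose rs := image (fun k : 'I_n => z ^+ k) [pred k : 'I_n | coprime k n].
have Ecyc : cyclotomic z n = \prod_(w <- rs) ('X - w%:P).
  by rewrite big_image.
have [q ->] : exists q, cyclotomic z n \Po 'X^c = q * \prod_(w <- rs) ('X - w%:P).
  apply: uniq_roots_prod_XsubC.
    apply/allP => w /imageP [k kco ->].
    rewrite /root horner_comp hornerXn -exprM.
    have := root_cyclotomic pz (z ^+ (k * c)).
    rewrite /root => ->; rewrite prim_root_exp_coprime // coprimeMl co andbT; exact: kco.
  rewrite uniq_rootsE /rs /image_mem map_inj_in_uniq ?enum_uniq // => i j _ _ /eqP; rewrite (eq_prim_root_expr pz) !modn_small //.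
  by move/eqP/val_inj.
by rewrite Ecyc dvdp_mull.
Qed.

Lemma Xn_sub1_dvd (R : comNzRingType) (n m : nat) :
  exists h : {poly R}, 'X^(n * m) - 1 = h * ('X^n - 1).
Proof.
exists (\sum_(i < m) ('X^n) ^+ (m.-1 - i) * 1 ^+ i).
by rewrite mulrC -subrXX exprM expr1n.
Qed.

Lemma cyc_dvd_Xn (n N : nat) : (0 < n)%N -> (n %| N)%N ->
  exists h : {poly int}, 'X^N - 1 = h * 'Phi_n.
Proof.
move=> n0 /dvdnP [m ->]; rewrite mulnC.
have [h1 ->] := Xn_sub1_dvd int n m.
rewrite -prod_Cyclotomic // (big_rem n) /=; last by rewrite -dvdn_divisors.
exists (h1 * \prod_(d <- rem n (divisors n)) 'Phi_d).
by rewrite -mulrA [_ * \prod_(_ <- _) _]mulrC.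
Qed.

Lemma prod_cyc_dvd (s : seq nat) (N : nat) :
  all (fun n => (0 < n)%N && (n %| N)%N) s ->
  exists h : {poly int}, ('X^N - 1) ^+ size s = h * \prod_(n <- s) 'Phi_n.
Proof.
elim: s => [|n s IH] /=; first by exists 1; rewrite big_nil mulr1 expr0.
case/andP => /andP [n0 nN] /IH [h Eh].
have [h1 E1] := cyc_dvd_Xn n0 nN.
exists (h1 * h); rewrite exprS Eh E1 big_cons.
by rewrite -!mulrA; congr (_ * _); rewrite mulrCA.
Qed.
Section ZbDef.
Variable b : nat.

Definition zbs : pred rat := fun x =>
  if excluded_middle_informative (inZb b x) then true else false.

Lemma zbsP x : reflect (inZb b x) (zbs x).
Proof. rewrite /zbs; case: excluded_middle_informative => h; constructor => //. Qed.

Lemma inZb_nz x : inZb b x ->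
  exists m k, x = m%:~R / (b ^ k)%N%:R /\ (b ^ k)%N%:R != 0 :> rat.
Proof.
case=> m [k ->]; have [bk0|bk0] := eqVneq ((b ^ k)%N%:R : rat) 0.
  exists 0, 0%N; split; last by rewrite expn0 oner_eq0.
  by rewrite bk0 invr0 mulr0 mul0r.
by exists m, k.
Qed.

Lemma zbs_subring : subring_closed zbs.
Proof.
split.
- apply/zbsP; exists 1, 0%N; by rewrite expn0 divr1.
- move=> x y /zbsP/inZb_nz[m1 [k1 [-> n1]]] /zbsP/inZb_nz[m2 [k2 [-> n2]]]; apply/zbsP.
  exists (m1 * (b ^ k2)%N%:Z - m2 * (b ^ k1)%N%:Z), (k1 + k2)%N.
  rewrite -mulNr addf_div // expnD natrM; congr (_ / _).
  by rewrite rmorphB /= !rmorphM /= mulNr !pmulrn.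
- move=> x y /zbsP[m1 [k1 ->]] /zbsP[m2 [k2 ->]]; apply/zbsP.
  exists (m1 * m2), (k1 + k2)%N.
  by rewrite mulf_div expnD natrM rmorphM.
Qed.

HB.instance Definition _ := GRing.isSubringClosed.Build rat zbs zbs_subring.
End ZbDef.

Section Zb.
Variable b : nat.
Hypothesis hb : (0 < b)%N.
Local Notation zbs := (zbs b).


Lemma zbs_invb : (b%:R)^-1 \in zbs.
Proof. apply/zbsP; exists 1, 1%N; by rewrite expn1 div1r. Qed.

Notation PZ := (polyOver zbs).

Lemma PZP p : polyZb b p <-> p \in PZ.
Proof. split => [h|/polyOverP h i]; [apply/polyOverP => i; apply/zbsP; exact: h | apply/zbsP; exact: h]. Qed.

Lemma PZ_comp p q : p \in PZ -> q \in PZ -> p \Po q \in PZ.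
Proof. move=> hp hq; exact: polyOver_comp. Qed.

Lemma PZ_int (p : {poly int}) : map_poly intr p \in PZ.
Proof. apply/polyOverP => i; rewrite coef_map /=; exact: rpred_int. Qed.


Lemma PZ_N p : p \in PZ -> - p \in PZ.
Proof. by move=> h; apply: polyOverNr. Qed.

Lemma PZ_B p q : p \in PZ -> q \in PZ -> p - q \in PZ.
Proof. by move=> h1 h2; rewrite rpredD // PZ_N. Qed.

Definition cg (g p r : {poly rat}) := exists h, h \in PZ /\ p - r = h * g.

Lemma cgE g p r : congrZb b g p r <-> cg g p r.
Proof.
split=> [[h [/PZP hh E]]|[h [hh E]]]; exists h; split=> //; exact/PZP.
Qed.

Lemma cg_refl g p : cg g p p.
Proof. exists 0; split; [exact: rpred0 | by rewrite subrr mul0r]. Qed.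

Lemma cg_sym g p r : cg g p r -> cg g r p.
Proof.
case=> h [hh E]; exists (- h); split; first exact: PZ_N.
by rewrite -opprB E mulNr.
Qed.

Lemma cg_trans g p q r : cg g p q -> cg g q r -> cg g p r.
Proof.
case=> h1 [h1P E1] [h2 [h2P E2]]; exists (h1 + h2); split; first exact: rpredD.
by rewrite mulrDl -E1 -E2 addrA subrK.
Qed.

Lemma cg_add g p1 r1 p2 r2 : cg g p1 r1 -> cg g p2 r2 -> cg g (p1 + p2) (r1 + r2).
Proof.
case=> h1 [h1P E1] [h2 [h2P E2]]; exists (h1 + h2); split; first exact: rpredD.
by rewrite mulrDl -E1 -E2 opprD addrACA.
Qed.

Lemma cg_mul g p1 r1 p2 r2 : p1 \in PZ -> r2 \in PZ ->
  cg g p1 r1 -> cg g p2 r2 -> cg g (p1 * p2) (r1 * r2).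
Proof.
move=> Pp1 Pr2 [h1 [h1P E1]] [h2 [h2P E2]]; exists (p1 * h2 + h1 * r2); split.
  by rewrite rpredD // rpredM.
have -> : p1 * p2 - r1 * r2 = p1 * (p2 - r2) + (p1 - r1) * r2.
  by rewrite mulrBr mulrBl addrA subrK.
by rewrite E1 E2 mulrDl mulrA; congr (_ + _); rewrite -!mulrA [g * _]mulrC.
Qed.



Lemma cg_dvd g f k p r : k \in PZ -> g = k * f -> cg g p r -> cg f p r.
Proof.
move=> Pk -> [h [hP E]]; exists (h * k); split; first exact: rpredM.
by rewrite E mulrA.
Qed.

Lemma cg_sum g (I : Type) (rI : seq I) (F G : I -> {poly rat}) :
  (forall i, cg g (F i) (G i)) -> cg g (\sum_(i <- rI) F i) (\sum_(i <- rI) G i).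
Proof.
move=> H; elim/big_ind2: _ => //; first exact: cg_refl.
by move=> *; apply: cg_add.
Qed.

Lemma cg_scale g c p r : c \in zbs -> cg g p r -> cg g (c *: p) (c *: r).
Proof.
move=> Pc [h [hP E]]; exists (c *: h); split; first exact: polyOverZ.
by rewrite -scalerBr E scalerAl.
Qed.

Lemma cg_exp g p r n : p \in PZ -> r \in PZ -> cg g p r -> cg g (p ^+ n) (r ^+ n).
Proof.
move=> Pp Pr H; elim: n => [|n IH]; first by rewrite !expr0; apply: cg_refl.
rewrite !exprS; apply: cg_mul => //; exact: rpredX.
Qed.

Lemma cg_comp g y p r : y \in PZ -> p \in PZ -> r \in PZ -> cg g p r ->
  cg g (y \Po p) (y \Po r).
Proof.
move=> Py Pp Pr H; rewrite !comp_polyE; apply: cg_sum => i.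
apply: cg_scale; first exact: (polyOverP Py).
exact: cg_exp.
Qed.

Lemma cg_compR g Q p r : Q \in PZ -> cg g p r -> cg (g \Po Q) (p \Po Q) (r \Po Q).
Proof.
move=> PQ [h [hP E]]; exists (h \Po Q); split; first exact: PZ_comp.
by rewrite -comp_polyB E comp_polyM.
Qed.

Lemma cg0 g p r : cg g p r <-> cg g (p - r) 0.
Proof. by rewrite /cg subr0. Qed.


Definition u (N : nat) : {poly rat} := 'X^N - 1.

Lemma PZ_u N : u N \in PZ.
Proof. by rewrite /u PZ_B ?polyOverXn ?rpred1. Qed.

Lemma u_neq0 N : (0 < N)%N -> u N != 0.
Proof. by move=> N0; rewrite /u monic_neq0 // monicXnsubC. Qed.

Lemma u_mul N e : exists S, S \in PZ /\ 'X^(e * N) - 1 = S * u N.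
Proof.
exists (\sum_(i < e) ('X^N) ^+ (e.-1 - i) * 1 ^+ i); split.
  by apply: rpred_sum => i _; rewrite rpredM ?rpredX ?polyOverX ?rpred1.
by rewrite [_ * u N]mulrC /u -subrXX mulnC exprM expr1n.
Qed.

Lemma cg_XeN N e a : cg (u N) ('X^(e * N + a)) ('X^a).
Proof.
have [S [PS E]] := u_mul N e.
exists (S * 'X^a); split; first by rewrite rpredM ?polyOverXn.
by rewrite exprD -{2}(mul1r 'X^a) -mulrBl E mulrAC.
Qed.

Definition bP : {poly rat} := b%:R.
Definition binv : {poly rat} := ((b%:R : rat)^-1)%:P.

Lemma PZ_bP : bP \in PZ. Proof. exact: rpred_nat. Qed.
Lemma PZ_binv : binv \in PZ. Proof. by rewrite polyOverC zbs_invb. Qed.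
Lemma bP_binv : bP * binv = 1.
Proof.
rewrite /bP /binv -polyC_natr -polyCM divff //.
by rewrite pnatr_eq0 -lt0n.
Qed.

Lemma cg_inv N a : (0 < N)%N ->
  cg (u N) (bP * 'X^a * (binv * 'X^(N.-1 * a))) 1.
Proof.
move=> N0.
have -> : bP * 'X^a * (binv * 'X^(N.-1 * a)) = 'X^(a * N + 0).
  rewrite mulrACA bP_binv mul1r -exprD addn0 -{1}(mul1n a) -mulnDl.
  by rewrite add1n prednK // mulnC.
by rewrite -(expr0 'X); apply: cg_XeN.
Qed.

Lemma cg_sumXX g n A B : A \in PZ -> B \in PZ -> cg g A B ->
  cg g (\sum_(i < n) A ^+ (n.-1 - i) * B ^+ i) (B ^+ n.-1 *+ n).
Proof.
move=> PA PB H.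
have -> : B ^+ n.-1 *+ n = \sum_(i < n) B ^+ (n.-1 - i) * B ^+ i.
  rewrite -[n in _ *+ n]card_ord -sumr_const; apply: eq_bigr => i _.
  by rewrite -exprD subnK // -ltnS prednK // (leq_ltn_trans _ (ltn_ord i)).
apply: cg_sum => i; apply: cg_mul; rewrite ?rpredX //; first exact: cg_exp.
exact: cg_refl.
Qed.


Lemma cg_opp g p r : cg g p r -> cg g (- p) (- r).
Proof.
case=> h [hP E]; exists (- h); split; first exact: PZ_N.
by rewrite -opprD E mulNr.
Qed.

Lemma cg_zero_mul g p k : k \in PZ -> cg g p 0 -> cg g (p * k) 0.
Proof.
move=> Pk [h [hP E]]; exists (h * k); split; first exact: rpredM.
by rewrite subr0 in E; rewrite subr0 E mulrAC.
Qed.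

Lemma hensel N c j : (0 < N)%N -> (exists e, b * c = e * N + 1)%N -> (0 < j)%N ->
  exists P, [/\ P \in PZ, cg (u N) P ('X^c) & cg (u N ^+ j) (P ^+ b) 'X].
Proof.
move=> N0 [e Ebc]; elim: j => [|j IH] // _.
have [-> | j0] := posnP j.
  exists 'X^c; split; first exact: polyOverXn.
  - exact: cg_refl.
  - by rewrite expr1 -exprM mulnC Ebc; have := cg_XeN N e 1; rewrite expr1.
have [P [PP HP [h [Ph Eh]]]] := IH j0.
pose W := binv * 'X^(N.-1 * (c * b.-1)).
have PW : W \in PZ by rewrite rpredM ?PZ_binv ?polyOverXn.
have HW : cg (u N) (bP * P ^+ b.-1 * W) 1.
  apply: (cg_trans _ (cg_inv (c * b.-1) N0)).
  apply: cg_mul; rewrite ?rpredM ?rpredX ?PZ_bP ?PZ_binv ?polyOverX //; last exact: cg_refl.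
  apply: cg_mul; rewrite ?PZ_bP ?rpredX ?polyOverX //; first exact: cg_refl.
  rewrite exprM; apply: cg_exp; rewrite ?polyOverXn //.
pose t := - (h * W).
have Pt : t \in PZ by rewrite PZ_N // rpredM.
pose P' := P + u N ^+ j * t.
have PP' : P' \in PZ by rewrite rpredD // rpredM // rpredX // PZ_u.
have HP' : cg (u N) P' P.
  exists (u N ^+ j.-1 * t); split; first by rewrite rpredM // rpredX // PZ_u.
  by rewrite /P' addrAC subrr add0r mulrAC -exprSr prednK.
pose S := \sum_(i < b) P' ^+ (b.-1 - i) * P ^+ i.
have PS : S \in PZ.
  by apply: rpred_sum => i _; rewrite rpredM // rpredX.
have HS : cg (u N) S (P ^+ b.-1 *+ b) by apply: cg_sumXX.
have H0 : cg (u N) (h + t * S) 0.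
  apply: (@cg_trans _ _ (h + t * (P ^+ b.-1 *+ b))).
    apply: cg_add; first exact: cg_refl.
    apply: cg_mul; rewrite ?rpredMn ?rpredX //; exact: cg_refl.
  have -> : h + t * (P ^+ b.-1 *+ b) = h * (1 - bP * P ^+ b.-1 * W).
    rewrite /t mulrBr mulr1 mulNr; congr (_ - _).
    rewrite /bP mulrnAr -mulr_natl !mulrA [b%:R * h]mulrC -!mulrA; congr (_ * _); by rewrite [P ^+ _ * _]mulrC -mulrA.
  rewrite -(mulr0 h); apply: cg_mul; rewrite ?rpred0 //; first exact: cg_refl.
  by rewrite -(subrr 1); apply: cg_add; [exact: cg_refl | exact: cg_opp HW].
have [r [Pr Er]] := H0.
exists P'; split => //; first exact: cg_trans HP' HP.
exists r; split => //.
have -> : P' ^+ b - 'X = (P' ^+ b - P ^+ b) + (P ^+ b - 'X) by rewrite addrA subrK.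
rewrite subrXX Eh /P' addrAC subrr add0r -/S.
rewrite -mulrA [h * _]mulrC -mulrDr addrC.
rewrite subr0 in Er; rewrite Er exprSr mulrCA mulrA.
done.
Qed.


Lemma uniq_root N K A : (0 < N)%N -> A \in PZ -> cg (u N) A 'X ->
  cg (u N ^+ K) (A ^+ b) ('X ^+ b) -> cg (u N ^+ K) A 'X.
Proof.
move=> N0 PA HA [g [Pg Eg]].
suff: forall j, (j <= K)%N -> cg (u N ^+ j) A 'X by apply.
elim=> [|j IH] jK.
  exists (A - 'X); split; first by rewrite PZ_B ?polyOverX.
  by rewrite expr0 mulr1.
have [t [Pt Et]] := IH (ltnW jK).
pose S := \sum_(i < b) A ^+ (b.-1 - i) * 'X ^+ i.
have PS : S \in PZ by apply: rpred_sum => i _; rewrite rpredM // rpredX ?polyOverX.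
have HtS : cg (u N) (t * S) 0.
  exists (g * u N ^+ (K - j).-1); split; first by rewrite rpredM // rpredX // PZ_u.
  rewrite subr0; apply: (@mulfI _ (u N ^+ j)); first by rewrite expf_neq0 // u_neq0.
  have E1 : u N ^+ K = u N ^+ j * u N ^+ (K - j) by rewrite -exprD subnKC // ltnW.
  have E2 : u N ^+ (K - j) = u N ^+ (K - j).-1 * u N by rewrite -exprSr prednK // subn_gt0.
  rewrite mulrA [_ * t]mulrC -Et -subrXX Eg E1 E2.
  by rewrite mulrCA -!mulrA.
pose W := binv * 'X^(N.-1 * b.-1).
have PW : W \in PZ by rewrite rpredM ?PZ_binv ?polyOverXn.
have HW : cg (u N) (S * W) 1.
  apply: (cg_trans _ (cg_inv b.-1 N0)).
  apply: cg_mul => //; last exact: cg_refl.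
  rewrite /bP mulr_natl; apply: cg_sumXX => //; exact: polyOverX.
have Ht : cg (u N) t 0.
  apply: (@cg_trans _ _ (t * (S * W))).
    rewrite -{1}(mulr1 t); apply: cg_mul => //; [exact: rpredM | exact: cg_refl |].
    exact: cg_sym HW.
  by rewrite mulrA; apply: cg_zero_mul.
have [t' [Pt' Et']] := Ht.
exists t'; split => //.
by rewrite subr0 in Et'; rewrite Et Et' exprS mulrA.
Qed.


Definition phi n : {poly rat} := map_poly intr 'Phi_n.

Lemma PZ_phi n : phi n \in PZ. Proof. exact: PZ_int. Qed.

Lemma phi_comp_dvd n c Q : (0 < n)%N -> coprime c n -> Q \in PZ ->
  cg (phi n) Q ('X^c) -> exists h, h \in PZ /\ phi n \Po Q = h * phi n.
Proof.
move=> n0 co PQ HQ.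
have [h0 E0] := cyc_dvd_comp n0 co.
have E1 : phi n \Po 'X^c = map_poly intr h0 * phi n.
  by have := congr1 (map_poly (intr : int -> rat)) E0; rewrite map_comp_poly map_polyXn rmorphM.
have [k [Pk Ek]] := cg_comp (PZ_phi n) PQ (polyOverXn _ _) HQ.
exists (k + map_poly intr h0); split; first by rewrite rpredD // PZ_int.
by rewrite mulrDl -Ek -E1 subrK.
Qed.

Lemma prod_comp_dvd s c Q : all (fun n => (0 < n)%N && coprime c n) s -> Q \in PZ ->
  (forall n, n \in s -> cg (phi n) Q ('X^c)) ->
  exists h, h \in PZ /\ (\prod_(n <- s) phi n) \Po Q = h * \prod_(n <- s) phi n.
Proof.
move=> + PQ; elim: s => [|n s IH] /=.
  by move=> _ _; exists 1; split; rewrite ?rpred1 // big_nil comp_polyC mulr1.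
case/andP => /andP [n0 co] As H.
have [h1 [P1 E1]] := phi_comp_dvd n0 co PQ (H n (mem_head _ _)).
have [h2 [P2 E2]] := IH As (fun m ms => H m (@mem_behead _ (n :: s) _ ms)).
exists (h1 * h2); split; first exact: rpredM.
rewrite !big_cons comp_polyM E1 E2.
by rewrite -!mulrA; congr (_ * _); rewrite mulrCA.
Qed.

Lemma f_dvd_u s N : all (fun n => (0 < n)%N && (n %| N)%N) s ->
  exists h, h \in PZ /\ u N ^+ size s = h * \prod_(n <- s) phi n.
Proof.
move=> As; have [h E] := prod_cyc_dvd As.
exists (map_poly intr h); split; first exact: PZ_int.
have := congr1 (map_poly (intr : int -> rat)) E.
rewrite rmorphM rmorph_prod /= rmorphXn rmorphB /= map_polyXn rmorph1 => ->.
by [].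
Qed.

Lemma cg_u_phi n N p r : (0 < n)%N -> (n %| N)%N -> cg (u N) p r -> cg (phi n) p r.
Proof.
move=> n0 nN; apply: (@cg_dvd _ _ (map_poly intr (projT1 (sig_eqW (cyc_dvd_Xn n0 nN))))).
  exact: PZ_int.
case: (sig_eqW _) => h /= E.
have := congr1 (map_poly (intr : int -> rat)) E.
by rewrite rmorphM /= rmorphB /= map_polyXn rmorph1.
Qed.


Lemma prodseq_props (s : seq nat) : all (fun n => (0 < n)%N && coprime n b) s ->
  [/\ (0 < \prod_(n <- s) n)%N, coprime (\prod_(n <- s) n) b &
      all (fun n => (0 < n)%N && (n %| \prod_(n <- s) n)%N) s].
Proof.
elim: s => [|n s IH] /=; first by rewrite big_nil coprime1n.
case/andP => /andP [n0 co] /IH [P0 Pco Pall].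
rewrite big_cons muln_gt0 n0 P0 coprimeMl co Pco dvdn_mulr //; split => //.
apply/allP => m ms; have /andP [-> mP] := allP Pall m ms.
by rewrite dvdn_mull.
Qed.

Lemma frob_dvd f : PhiStar b f -> exists h, h \in PZ /\ f \Po 'X^b = h * f.
Proof.
case=> s [As ->].
apply: (@prod_comp_dvd s b); [ | exact: polyOverXn | by move=> n _; apply: cg_refl].
apply/allP => n ns; have /andP [-> co] := allP As n ns.
by rewrite coprime_sym.
Qed.

Lemma good f : PhiStar b f -> exists P, [/\ P \in PZ, cg f (P ^+ b) 'X,
  cg f (P \Po 'X^b) 'X & exists h, h \in PZ /\ f \Po P = h * f].
Proof.
case=> s [As ->].
have [N0 Nco Nall] := prodseq_props As.
set N := \prod_(n <- s) n in N0 Nco Nall.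
case: (egcdnP N hb) => c e Ebc _.
have g1 : gcdn b N = 1%N by apply/eqP; rewrite -/(coprime b N) coprime_sym.
rewrite g1 in Ebc.
have cco : coprime c N.
  have H1 : (gcdn c N %| e * N)%N by rewrite dvdn_mull // dvdn_gcdr.
  by rewrite /coprime -dvdn1 -(dvdn_addr 1 H1) -Ebc dvdn_mulr // dvdn_gcdl.
pose K := (size s).+1.
have [P [PP HPc HPb]] := hensel N0 (ex_intro _ e (etrans (mulnC _ _) Ebc)) (ltn0Sn (size s)).
have [hf [Phf Ehf]] := f_dvd_u Nall.
have EK : u N ^+ K = (u N * hf) * \prod_(n <- s) phi n by rewrite exprS Ehf mulrA.
have PK : u N * hf \in PZ by rewrite rpredM // PZ_u.
have [S [PS ES]] := u_mul N b.
have EuX : u N \Po 'X^b = S * u N.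
  by rewrite /u comp_polyB comp_polyC comp_Xn_l -exprM ES.
exists P; split => //.
- exact: cg_dvd PK EK HPb.
- apply: cg_dvd PK EK _.
  apply: uniq_root => //; first exact: PZ_comp (polyOverXn _ _).
    apply: (@cg_trans _ _ ('X^c \Po 'X^b)).
      exact: (@cg_dvd (u N \Po 'X^b) (u N) S _ _ PS EuX (cg_compR (polyOverXn _ _) HPc)).
    rewrite comp_Xn_l -exprM mulnC Ebc.
    by have := cg_XeN N e 1; rewrite expr1.
  apply: (@cg_dvd (u N ^+ K \Po 'X^b) _ (S ^+ K)); first exact: rpredX.
    by rewrite rmorphXn /= EuX exprMn.
  have -> : (P \Po 'X^b) ^+ b = P ^+ b \Po 'X^b by rewrite rmorphXn.
  by have := cg_compR (polyOverXn _ b) HPb; rewrite comp_polyX.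
- apply: (@prod_comp_dvd s c) => //.
    apply/allP => n ns; have /andP [-> nN] := allP Nall n ns.
    by rewrite (coprime_dvdr nN).
  move=> n ns; have /andP [n0 nN] := allP Nall n ns.
  exact: cg_u_phi n0 nN HPc.
Qed.


Lemma frob_cg f p r : PhiStar b f -> cg f p r -> cg f (p \Po 'X^b) (r \Po 'X^b).
Proof.
move=> Hf H; have [h [Ph Eh]] := frob_dvd Hf.
exact: cg_dvd Ph Eh (cg_compR (polyOverXn _ _) H).
Qed.

Lemma inj_f f d : PhiStar b f -> d \in PZ -> cg f (d \Po 'X^b) 0 -> cg f d 0.
Proof.
move=> Hf Pd [k [Pk Ek]].
have [P [PP HPb _ [h [Ph Eh]]]] := good Hf.
apply: (@cg_trans _ _ (d \Po (P ^+ b))).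
  rewrite -{1}(comp_polyXr d); apply: cg_comp => //; rewrite ?polyOverX ?rpredX //.
  exact: cg_sym HPb.
exists ((k \Po P) * h); split; first by rewrite rpredM // PZ_comp.
rewrite subr0 in Ek; rewrite subr0 -comp_Xn_l comp_polyA Ek comp_polyM Eh.
by rewrite mulrA.
Qed.

Lemma main_sec :
  (forall x, limfam b x -> limfam b (Frob b x)) /\
  (forall x y, limfam b x -> limfam b y -> limeq b x y ->
     limeq b (Frob b x) (Frob b y)) /\
  (forall x y, limfam b x -> limfam b y ->
     limeq b (Frob b (fun f => x f + y f)) (fun f => Frob b x f + Frob b y f)) /\
  (forall x y, limfam b x -> limfam b y ->
     limeq b (Frob b (fun f => x f * y f)) (fun f => Frob b x f * Frob b y f)) /\
  (forall c x, inZb b c -> limfam b x ->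
     limeq b (Frob b (fun f => c *: x f)) (fun f => c *: Frob b x f)) /\
  limeq b (Frob b (fun _ => 1)) (fun _ => 1) /\
  (forall x y, limfam b x -> limfam b y ->
     limeq b (Frob b x) (Frob b y) -> limeq b x y) /\
  (forall y, limfam b y -> exists x, limfam b x /\ limeq b (Frob b x) y).
Proof.
have PXb : 'X^b \in PZ by exact: polyOverXn.
split; [|split; [|split; [|split; [|split; [|split; [|split]]]]]].
- move=> x [H1 H2]; split.
    by move=> f Hf; apply/PZP; apply: PZ_comp => //; apply/PZP; exact: H1.
  move=> f g Hf Hg Hfg; apply/cgE; apply: frob_cg => //; apply/cgE; exact: H2.
- move=> x y _ _ H f Hf; apply/cgE; apply: frob_cg => //; apply/cgE; exact: H.
- by move=> x y _ _ f _; apply/cgE; rewrite /Frob comp_polyD; apply: cg_refl.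
- by move=> x y _ _ f _; apply/cgE; rewrite /Frob comp_polyM; apply: cg_refl.
- by move=> c x _ _ f _; apply/cgE; rewrite /Frob comp_polyZ; apply: cg_refl.
- by move=> f _; apply/cgE; rewrite /Frob rmorph1; apply: cg_refl.
- move=> x y [Hx _] [Hy _] H f Hf; apply/cgE; apply/cg0.
  apply: inj_f => //; first by rewrite PZ_B //; apply/PZP; [exact: Hx | exact: Hy].
  rewrite comp_polyB; apply: (proj1 (cg0 _ _ _)); apply/cgE; exact: H.
move=> y [Hy1 Hy2].
have Py : forall f, PhiStar b f -> y f \in PZ by move=> f Hf; apply/PZP; exact: Hy1.
have HP : forall f, exists P, PhiStar b f -> [/\ P \in PZ, cg f (P ^+ b) 'X,
  cg f (P \Po 'X^b) 'X & exists h, h \in PZ /\ f \Po P = h * f].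
  move=> f; case: (classic (PhiStar b f)) => Hf.
    by have [P HP] := good Hf; exists P.
  by exists 0.
pose Pf f := proj1_sig (constructive_indefinite_description _ (HP f)).
have HPf : forall f, PhiStar b f -> [/\ Pf f \in PZ, cg f (Pf f ^+ b) 'X,
  cg f (Pf f \Po 'X^b) 'X & exists h, h \in PZ /\ f \Po Pf f = h * f].
  by move=> f; rewrite /Pf; case: constructive_indefinite_description.
have Ky : forall f, PhiStar b f -> cg f ((y f \Po Pf f) \Po 'X^b) (y f).
  move=> f Hf; have [PP _ HPX _] := HPf f Hf.
  rewrite -comp_polyA -{2}(comp_polyXr (y f)); apply: cg_comp => //.
  + by apply/PZP; exact: Hy1.
  + exact: PZ_comp.
  + exact: polyOverX.
exists (fun f => y f \Po Pf f); split; last first.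
  by move=> f Hf; apply/cgE; exact: Ky.
split.
  move=> f Hf; apply/PZP; apply: PZ_comp; first by apply/PZP; exact: Hy1.
  by have [] := HPf f Hf.
have PPf : forall f, PhiStar b f -> Pf f \in PZ by move=> f Hf; have [] := HPf f Hf.
move=> f g Hf Hg Hfg; apply/cgE; apply/cg0; apply: inj_f => //.
  by rewrite PZ_B // PZ_comp ?Py ?PPf.
rewrite comp_polyB; apply: (proj1 (cg0 _ _ _)).
have [k [/PZP Pk Ek]] := Hfg; rewrite subr0 in Ek.
apply: (cg_trans (cg_dvd Pk Ek (Ky g Hg))).
apply: cg_trans (cg_sym (Ky f Hf)).
apply/cgE; exact: Hy2.
Qed.

End Zb.

Theorem theorem13 (b : nat) (hb : (0 < b)%N) :
  (* well-defined on elements *)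
  (forall x, limfam b x -> limfam b (Frob b x)) /\
  (* well-defined on classes *)
  (forall x y, limfam b x -> limfam b y -> limeq b x y ->
     limeq b (Frob b x) (Frob b y)) /\
  (* Z[1/b]-algebra homomorphism *)
  (forall x y, limfam b x -> limfam b y ->
     limeq b (Frob b (fun f => x f + y f)) (fun f => Frob b x f + Frob b y f)) /\
  (forall x y, limfam b x -> limfam b y ->
     limeq b (Frob b (fun f => x f * y f)) (fun f => Frob b x f * Frob b y f)) /\
  (forall c x, inZb b c -> limfam b x ->
     limeq b (Frob b (fun f => c *: x f)) (fun f => c *: Frob b x f)) /\
  limeq b (Frob b (fun _ => 1)) (fun _ => 1) /\
  (* injective *)
  (forall x y, limfam b x -> limfam b y ->
     limeq b (Frob b x) (Frob b y) -> limeq b x y) /\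
  (* surjective *)
  (forall y, limfam b y -> exists x, limfam b x /\ limeq b (Frob b x) y).
Proof. exact: main_sec hb. Qed.
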